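(* Let $X=\{1,\dots,n\}$, $Y$ finite, $Q$ a symmetric irreducible stochastic matrix on $Y$ (notation in context). Let $\underline a=(a_0,\dots,a_m)$ be a type with $a_0+\cdots+a_m=h$, and let $k$ be an integer with $\ell(\underline a)\le k\le\frac{n+\ell(\underline a)}{2}$ and $k\le h\le n+\ell(\underline a)-k$. Write $\underline a^{(r)}=(a_0-r,a_1,\dots,a_m)$. Then for every $F\in P_{k,\underline a^{(h-k)},k}$, $$\big\|D^*_{h,\underline a}D^*_{h-1,\underline a^{(1)}}\cdots D^*_{k+1,\underline a^{(h-k-1)}}F\big\|^2=\frac{(n+\ell(\underline a)-2k)!\,(h-k)!}{(n+\ell(\underline a)-k-h)!}\,|Y|^{h-k}\,\|F\|^2 .$$ In particular $D^*_{h,\underline a}D^*_{h-1,\underline a^{(1)}}\cdots D^*_{k+1,\underline a^{(h-k-1)}}$ is an isomorphism of $P_{k,\underline a^{(h-k)},k}$ onto $P_{h,\underline a,k}$.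
   Context: $Q$ acts on $L(Y)$ by $(Qf)(y)=\sum_{y'}q(y,y')f(y')$, with distinct eigenvalues $\lambda_0=1,\dots,\lambda_m$ and eigenspaces $W_0$ (constants), $W_1,\dots,W_m$. For $0\le k\le n$, $\Theta_k$ is the set of functions $\theta$ with $\mathrm{dom}(\theta)$ a $k$-subset of $X$ and values in $Y$ ($\Theta_0$ = empty function), with inner product $\langle F,G\rangle=\sum_{\theta\in\Theta_k}F(\theta)\overline{G(\theta)}$ on $L(\Theta_k)$ and norm $\|F\|^2=\langle F,F\rangle$; $\varphi\subseteq\theta$ means $\mathrm{dom}\varphi\subseteq\mathrm{dom}\theta$ and $\theta|_{\mathrm{dom}\varphi}=\varphi$. For $1\le k\le n$: $(D_kF)(\varphi)=\sum_{\theta\in\Theta_k:\theta\supseteq\varphi}F(\theta)$ and $(D_k^*F)(\theta)=\sum_{\varphi\in\Theta_{k-1}:\varphi\subseteq\theta}F(\varphi)$; $D_0:=0$. Types $\underline c=(c_0,\dots,c_m)$, $|\underline c|=\sum c_i$, $\ell(\underline c)=c_1+\cdots+c_m$, $\underline c'=(c_0-1,c_1,\dots,c_m)$. A fundamental function of type $\underline c$ on $A$, $|A|=|\underline c|$, is $F=\bigotimes_{j\in A}F^j$ ($F(\theta)=\prod_{j\in A}F^j(\theta(j))$ on $Y^A$, $0$ elsewhere) with each $F^j$ in some $W_{i_j}$ and exactly $c_i$ indices with $i_j=i$; $P_{k,\underline c,A}$ is their span, $P_{k,\underline c}=\bigoplus_{|A|=k}P_{k,\underline c,A}$. $D_{k,\underline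 c}=D_k|_{P_{k,\underline c}}$, $D^*_{k,\underline c}=D^*_k|_{P_{k-1,\underline c'}}$. For $|\underline c|=k$: $P_{k,\underline c,k}=\ker D_{k,\underline c}$; for $k<h\le n$, $|\underline c|=h$, $\ell(\underline c)\le k$: $P_{h,\underline c,k}=D^*_{h,\underline c}(P_{h-1,\underline c',k})$. For $h=k$ the composition of the $D^*$'s is the identity. *)

(* Defs.v *)
From HB Require Import structures.
From mathcomp Require Import all_boot all_order all_algebra all_field.
Set Implicit Arguments. Unset Strict Implicit. Unset Printing Implicit Defensive.
Import Order.TTheory GRing.Theory Num.Theory.
Local Open Scope ring_scope.

Definition Qop (Y : finType) (q : Y -> Y -> algC) (f : Y -> algC) (y : Y) : algC :=
  \sum_(y' : Y) q y y' * f y'.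

Definition inW (Y : finType) (q : Y -> Y -> algC) (m : nat) (lam : 'I_m.+1 -> algC)
  (i : 'I_m.+1) (f : Y -> algC) : Prop :=
  forall y, Qop q f y = lam i * f y.

(* Partial functions X -> Y, X = 'I_n (X = {1..n} shifted to {0..n-1}). *)
Definition pf (n : nat) (Y : finType) := {ffun 'I_n -> option Y}.
Definition dom n (Y : finType) (th : pf n Y) : {set 'I_n} := [set j | th j != None].
Definition subpf n (Y : finType) (phi th : pf n Y) : bool :=
  [forall j, (phi j != None) ==> (phi j == th j)].

(* Functions on Theta_k are represented as functions on all partial maps;
   only values on Theta_k = {theta | #|dom theta| = k} matter. *)
Definition Lfun n (Y : finType) := pf n Y -> algC.

Definition Dk n (Y : finType) (k : nat) (F : Lfun n Y) : Lfun n Y :=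
  fun phi => if k is 0 then 0 else
    if #|dom phi| == k.-1 then
      \sum_(th : pf n Y | (#|dom th| == k) && subpf phi th) F th
    else 0.

Definition Dstar n (Y : finType) (k : nat) (F : Lfun n Y) : Lfun n Y :=
  fun th => if #|dom th| == k then
      \sum_(phi : pf n Y | (#|dom phi| == k.-1) && subpf phi th) F phi
    else 0.

Definition norm2 n (Y : finType) (k : nat) (F : Lfun n Y) : algC :=
  \sum_(th : pf n Y | #|dom th| == k) F th * (F th)^*.

Definition type_size m (c : 'I_m.+1 -> nat) : nat := (\sum_(i < m.+1) c i)%N.
Definition ell m (c : 'I_m.+1 -> nat) : nat := (\sum_(i < m.+1 | i != ord0) c i)%N.
Definition shift m (r : nat) (c : 'I_m.+1 -> nat) : 'I_m.+1 -> nat :=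
  fun i => if i == ord0 then (c i - r)%N else c i.

Definition tensorF n (Y : finType) (A : {set 'I_n}) (Fj : 'I_n -> Y -> algC) : Lfun n Y :=
  fun th => if dom th == A then
      \prod_(j in A) (match th j with Some y => Fj j y | None => 0 end)
    else 0.

Section P.
Variables (Y : finType) (q : Y -> Y -> algC) (m : nat) (lam : 'I_m.+1 -> algC) (n : nat).

Definition fundamental (k : nat) (c : 'I_m.+1 -> nat) (G : Lfun n Y) : Prop :=
  exists (A : {set 'I_n}) (ij : 'I_n -> 'I_m.+1) (Fj : 'I_n -> Y -> algC),
    [/\ #|A| = k,
        (forall j, j \in A -> inW q lam (ij j) (Fj j)),
        (forall i, #|[set j in A | ij j == i]| = c i)
      & forall th, G th = tensorF A Fj th].

Definition Pspan (k : nat) (c : 'I_m.+1 -> nat) (F : Lfun n Y) : Prop :=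
  exists (N : nat) (coef : 'I_N -> algC) (G : 'I_N -> Lfun n Y),
    (forall i, fundamental k c (G i)) /\
    (forall th, F th = \sum_(i < N) coef i * G i th).

Definition Pker (k : nat) (c : 'I_m.+1 -> nat) (F : Lfun n Y) : Prop :=
  Pspan k c F /\ forall phi, Dk k F phi = 0.

(* Pgen d c k = P_{k+d, c, k}: P_{h,c,k} = D*_{h,c}(P_{h-1,c',k}) *)
Fixpoint Pgen (d : nat) (c : 'I_m.+1 -> nat) (k : nat) (F : Lfun n Y) : Prop :=
  match d with
  | 0 => Pker k c F
  | d'.+1 => exists G, Pgen d' (shift 1 c) k G /\
                       forall th, F th = Dstar (k + d'.+1) G th
  end.
End P.

Fixpoint Dstar_iter n (Y : finType) (k d : nat) (F : Lfun n Y) : Lfun n Y :=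
  match d with
  | 0 => F
  | d'.+1 => Dstar (k + d'.+1) (Dstar_iter k d' F)
  end.

(* Main.v *)
Require Import Defs.
From HB Require Import structures.
From mathcomp Require Import all_boot all_order all_algebra all_field.
From mathcomp Require Import ring lra zify.
From Stdlib Require Import FunctionalExtensionality.
Set Implicit Arguments. Unset Strict Implicit. Unset Printing Implicit Defensive.
Import Order.TTheory GRing.Theory Num.Theory.
Local Open Scope ring_scope.

Definition upd n (Y : finType) (p : pf n Y) (x : 'I_n) (y : Y) : pf n Y :=
  [ffun j => if j == x then Some y else p j].
Definition rem n (Y : finType) (p : pf n Y) (z : 'I_n) : pf n Y :=
  [ffun j => if j == z then None else p j].

Lemma dom_upd n (Y : finType) (p : pf n Y) x y : dom (upd p x y) = x |: dom p.
Proof.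
apply/setP=> j; rewrite !inE /upd ffunE; by case: (j == x).
Qed.

Lemma dom_rem n (Y : finType) (p : pf n Y) z : dom (rem p z) = dom p :\ z.
Proof.
apply/setP=> j; rewrite !inE /rem ffunE; by case: (j == z).
Qed.

Lemma rem_upd_same n (Y : finType) (p : pf n Y) x y : rem (upd p x y) x = rem p x.
Proof. by apply/ffunP=> j; rewrite !ffunE; case: eqP. Qed.

Lemma rem_notin n (Y : finType) (p : pf n Y) x : x \notin dom p -> rem p x = p.
Proof.
rewrite inE negbK => /eqP px; apply/ffunP=> j; rewrite !ffunE; case: eqP => // ->.
by rewrite px.
Qed.

Lemma upd_rem_same n (Y : finType) (p : pf n Y) x y : upd (rem p x) x y = upd p x y.
Proof. by apply/ffunP=> j; rewrite !ffunE; case: eqP. Qed.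

Lemma rem_upd_comm n (Y : finType) (p : pf n Y) x y z : z != x ->
  rem (upd p x y) z = upd (rem p z) x y.
Proof.
move=> zx; apply/ffunP=> j; rewrite !ffunE; case: (eqVneq j z) => [->|//].
by rewrite (negbTE zx).
Qed.

Lemma card_dom_upd n (Y : finType) (p : pf n Y) x y : x \in dom p ->
  #|dom (upd p x y)| = #|dom p|.
Proof. by move=> xp; rewrite dom_upd cardsU1 xp. Qed.

Lemma sum_bij (I T : finType) (P : pred T) (A : {set I}) (g : I -> T) (F : T -> algC) :
  {in A &, injective g} -> (forall i, i \in A -> P (g i)) ->
  (forall t, P t -> exists2 i, i \in A & t = g i) ->
  \sum_(t | P t) F t = \sum_(i in A) F (g i).
Proof.
move=> ginj gP Pg; rewrite -(big_imset _ ginj) /=; apply: eq_bigl => t.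
apply/idP/imsetP => [/Pg [i iA ->]|[i iA ->]]; first by exists i.
exact: gP.
Qed.

Lemma subpfP n (Y : finType) (phi th : pf n Y) :
  subpf phi th -> forall j, phi j != None -> phi j = th j.
Proof. by move=> /forallP H j /(implyP (H j)) /eqP. Qed.

Lemma subpf_dom n (Y : finType) (phi th : pf n Y) :
  subpf phi th -> dom phi \subset dom th.
Proof.
move=> H; apply/subsetP=> j; rewrite !inE => pj.
by rewrite -(subpfP H pj).
Qed.

Lemma upd_self n (Y : finType) (p : pf n Y) z y : p z = Some y -> upd p z y = p.
Proof. by move=> pz; apply/ffunP=> j; rewrite ffunE; case: eqP => // ->. Qed.

Lemma subpf_rem n (Y : finType) (phi th : pf n Y) :
  subpf phi th -> #|dom th| = #|dom phi|.+1 ->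
  exists2 z, z \in dom th & (z \notin dom phi) /\ phi = rem th z.
Proof.
move=> H card.
have: ~~ (dom th \subset dom phi).
  by apply/negP=> /subset_leq_card; rewrite card ltnn.
case/subsetPn=> z zth zphi; exists z => //; split => //.
have sub: dom phi \subset dom th :\ z.
  apply/subsetP=> i ip; rewrite in_setD1 (subsetP (subpf_dom H) _ ip) andbT.
  by apply/eqP=> iz; rewrite -iz ip in zphi.
have eqd: dom phi = dom th :\ z.
  apply/eqP; rewrite eqEcard sub /=.
  by move: card; rewrite (cardsD1 z (dom th)) zth add1n => -[->].
apply/ffunP=> i; rewrite ffunE; case: (eqVneq i z) => [->|iz].
  by move: zphi; rewrite inE negbK => /eqP.
case: (eqVneq (phi i) None) => [pN|pN]; last exact: subpfP.
have: i \notin dom phi by rewrite inE pN.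
by rewrite eqd !inE iz /= negbK => /eqP ->.
Qed.

Lemma L1 n (Y : finType) (th : pf n Y) (j : nat) (G : Lfun n Y) :
  #|dom th| = j.+1 ->
  \sum_(phi | (#|dom phi| == j) && subpf phi th) G phi = \sum_(z in dom th) G (rem th z).
Proof.
move=> card; apply: sum_bij.
- move=> z z' zin z'in /ffunP /(_ z); rewrite !ffunE eqxx.
  case: (eqVneq z z') => // zz' /esym /eqP; by rewrite inE in zin; rewrite (negbTE zin).
- move=> z zin; apply/andP; split.
    by rewrite dom_rem; move: card; rewrite (cardsD1 z (dom th)) zin add1n => -[->].
  by apply/forallP=> i; apply/implyP; rewrite ffunE; case: (i == z).
- move=> phi /andP [/eqP c H].
  have [z zin [_ ->]] := subpf_rem H (etrans card (congr1 S (esym c))).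
  by exists z.
Qed.

Lemma L2 n (Y : finType) (phi : pf n Y) (j : nat) (H : Lfun n Y) :
  #|dom phi| = j ->
  \sum_(th | (#|dom th| == j.+1) && subpf phi th) H th =
  \sum_(x | x \notin dom phi) \sum_(y : Y) H (upd phi x y).
Proof.
move=> card.
rewrite pair_big_dep /=.
rewrite (@sum_bij _ _ _ [set p : 'I_n * Y | p.1 \notin dom phi] (fun p => upd phi p.1 p.2)).
- by apply: eq_bigl => p; rewrite inE andbT.
- move=> [x y] [x' y'] xn x'n; rewrite !inE /= in xn x'n; move=> /ffunP /(_ x); rewrite !ffunE eqxx.
  case: (eqVneq x x') => [<- [->] //|xx'].
  by move: xn; rewrite ?inE negbK => /eqP ->.
- move=> [x y]; rewrite inE /= => xn; apply/andP; split.
    by rewrite dom_upd cardsU1 xn card.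
  apply/forallP=> i; apply/implyP; rewrite ffunE; case: (eqVneq i x) => [->|//].
  by move: xn; rewrite ?inE negbK => /eqP ->.
- move=> th /andP [/eqP c Hs].
  have [z zin [zn eq]] := subpf_rem Hs (etrans c (congr1 S (esym card))).
  move: (zin); rewrite inE; case E: (th z) => [y|] // _.
  exists (z, y); first by rewrite inE.
  by rewrite /= eq upd_rem_same upd_self.
Qed.

Lemma dom_upd_in n (Y : finType) (p : pf n Y) x y : x \in dom p -> dom (upd p x y) = dom p.
Proof. by move=> xp; rewrite dom_upd; apply/setUidPr; rewrite sub1set. Qed.

Definition Esum n (Y : finType) (G : Lfun n Y) (phi : pf n Y) : algC :=
  \sum_(x in dom phi) \sum_(y : Y) G (upd phi x y).
Definition Pc n (Y : finType) (j c0 : nat) (G : Lfun n Y) :=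
  forall phi, #|dom phi| = j -> Esum G phi = c0%:R * #|Y|%:R * G phi.

Lemma Dstar_rem n (Y : finType) (j : nat) (G : Lfun n Y) th :
  #|dom th| = j.+1 -> Dstar j.+1 G th = \sum_(z in dom th) G (rem th z).
Proof. by move=> c; rewrite /Dstar c eqxx /=; exact: L1. Qed.

Lemma Dk_upd n (Y : finType) (j : nat) (H : Lfun n Y) phi :
  #|dom phi| = j -> Dk j.+1 H phi = \sum_(x | x \notin dom phi) \sum_(y : Y) H (upd phi x y).
Proof. by move=> c; rewrite /Dk /= c eqxx; exact: L2. Qed.

Lemma sum_constY (Y : finType) (c : algC) : \sum_(y : Y) c = #|Y|%:R * c.
Proof. by rewrite sumr_const mulr_natl. Qed.

Lemma Pc_Dstar n (Y : finType) j c0 (G : Lfun n Y) : Pc j c0 G -> Pc j.+1 c0.+1 (Dstar j.+1 G).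
Proof.
move=> HP th card; rewrite /Esum.
have step: forall x, x \in dom th -> \sum_(y : Y) Dstar j.+1 G (upd th x y) =
   #|Y|%:R * G (rem th x) + \sum_(z in dom th | z != x) \sum_(y : Y) G (upd (rem th z) x y).
  move=> x xin.
  under eq_bigr => y _ do rewrite (Dstar_rem _ (etrans (card_dom_upd y xin) card))
     (dom_upd_in y xin) (bigD1 x xin) /= rem_upd_same.
  rewrite big_split /= sum_constY; congr (_ + _).
  rewrite exchange_big /=; apply: eq_bigr => z /andP [_ zx].
  by apply: eq_bigr => y _; rewrite rem_upd_comm.
rewrite (eq_bigr _ step) big_split /= -mulr_sumr.
rewrite (exchange_big_dep (fun z => z \in dom th)) /=; last by move=> ? ? _ /andP [].
have e2: forall z, z \in dom th ->
  \sum_(x | (x \in dom th) && ((z \in dom th) && (z != x))) \sum_(y : Y) G (upd (rem th z) x y)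
  = c0%:R * #|Y|%:R * G (rem th z).
  move=> z zin; rewrite -HP; last by rewrite dom_rem; move: card; rewrite (cardsD1 z (dom th)) zin add1n => -[].
  rewrite /Esum; apply: eq_bigl => x; rewrite dom_rem in_setD1 zin eq_sym /=; by rewrite andbC.
rewrite (eq_bigr _ e2) -mulr_sumr Dstar_rem // -[c0.+1]addn1 natrD; ring.
Qed.

Lemma card_notin n (Y : finType) (phi : pf n Y) :
  #|[pred x | x \notin dom phi]| = (n - #|dom phi|)%N.
Proof.
have -> : #|[pred x | x \notin dom phi]| = #|~: dom phi| by apply: eq_card => x; rewrite !inE.
by have := cardsC (dom phi); rewrite card_ord; lia.
Qed.

Lemma DstarDk n (Y : finType) j (G : Lfun n Y) phi : #|dom phi| = j ->
  Dstar j (Dk j G) phi = Esum G phi +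
   \sum_(x | x \notin dom phi) \sum_(z in dom phi) \sum_(y : Y) G (upd (rem phi z) x y).
Proof.
case: j => [|j] card.
  have d0 : dom phi = set0 by apply/eqP; rewrite -cards_eq0 card.
  rewrite /Dstar card eqxx big1 // /Esum d0 big_set0 add0r big1 // => x _.
  by rewrite big_set0.
rewrite Dstar_rem // /Esum.
have e: forall z, z \in dom phi -> Dk j.+1 G (rem phi z) =
   \sum_(y : Y) G (upd phi z y) + \sum_(x | x \notin dom phi) \sum_(y : Y) G (upd (rem phi z) x y).
  move=> z zin; rewrite Dk_upd; last first.
    by rewrite dom_rem; move: card; rewrite (cardsD1 z (dom phi)) zin add1n => -[].
  rewrite (bigD1 z) /=; last by rewrite dom_rem !inE eqxx.
  under eq_bigr => y _ do rewrite upd_rem_same.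
  congr (_ + _); apply: eq_bigl => x; rewrite dom_rem in_setD1.
  case: (eqVneq x z) => [->|xz] /=; first by rewrite zin.
  by rewrite andbT.
rewrite (eq_bigr _ e) big_split /=; congr (_ + _).
by rewrite exchange_big.
Qed.

Lemma comm n (Y : finType) j c0 (G : Lfun n Y) phi : Pc j c0 G -> #|dom phi| = j ->
  Dk j.+1 (Dstar j.+1 G) phi =
  Dstar j (Dk j G) phi + ((n - j)%:R - c0%:R) * #|Y|%:R * G phi.
Proof.
move=> HP card; rewrite Dk_upd // DstarDk // HP //.
have e1: forall x, x \notin dom phi -> \sum_(y : Y) Dstar j.+1 G (upd phi x y) =
   #|Y|%:R * G phi + \sum_(z in dom phi) \sum_(y : Y) G (upd (rem phi z) x y).
  move=> x xn.
  have c' : forall y, #|dom (upd phi x y)| = j.+1 by move=> y; rewrite dom_upd cardsU1 xn card.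
  under eq_bigr => y _ do rewrite (Dstar_rem _ (c' y)) dom_upd (big_setU1 _ xn) /=
      rem_upd_same (rem_notin xn).
  rewrite big_split /= sum_constY; congr (_ + _).
  rewrite exchange_big /=; apply: eq_bigr => z zin; apply: eq_bigr => y _.
  rewrite rem_upd_comm //; apply/eqP=> zx; by rewrite -zx zin in xn.
rewrite (eq_bigr _ e1) big_split /= sumr_const card_notin card -[(_ * G phi) *+ _]mulr_natr.
rewrite natrB; last by rewrite -card; have := max_card (mem (dom phi)); rewrite card_ord.
ring.
Qed.

Fixpoint alpha (n k c0 ysz t : nat) : algC :=
  match t with
  | 0 => 0
  | t'.+1 => alpha n k c0 ysz t' + ((n - (k + t'))%:R - (c0 + t')%:R) * ysz%:R
  end.

Lemma alpha_real n k c0 ysz t : (alpha n k c0 ysz t)^* = alpha n k c0 ysz t.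
Proof.
elim: t => [|t IH] /=; first by rewrite rmorph0.
by rewrite rmorphD /= rmorphM /= rmorphB /= !conjC_nat IH.
Qed.

Lemma conj_alphaM n k c0 ysz t (x : algC) :
  (alpha n k c0 ysz t * x)^* = alpha n k c0 ysz t * x^*.
Proof. by rewrite rmorphM /= alpha_real. Qed.

Lemma Dstar_iterS n (Y : finType) k t (F : Lfun n Y) :
  Dstar_iter k t.+1 F = Dstar (k + t).+1 (Dstar_iter k t F).
Proof. by rewrite /= addnS. Qed.

Lemma iter_props n (Y : finType) k c0 (F : Lfun n Y) :
  Pc k c0 F -> (forall phi, Dk k F phi = 0) ->
  forall t, Pc (k + t) (c0 + t) (Dstar_iter k t F) /\
    forall phi, #|dom phi| = (k + t)%N ->
      Dk (k + t).+1 (Dstar_iter k t.+1 F) phi = alpha n k c0 #|Y| t.+1 * Dstar_iter k t F phi.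
Proof.
move=> HP HD; elim=> [|t [IHP IHD]].
  rewrite !addn0; split => // phi card.
  rewrite Dstar_iterS addn0 (comm HP card) /=.
  rewrite [Dstar _ _ _](_ : _ = 0) ?add0r ?addn0 //.
  by rewrite /Dstar; case: ifP => // _; rewrite big1.
have P1 : Pc (k + t.+1) (c0 + t.+1) (Dstar_iter k t.+1 F).
  by rewrite Dstar_iterS !addnS; apply: Pc_Dstar.
split => // phi card.
rewrite Dstar_iterS (comm P1 card).
have card' := card; rewrite addnS in card'.
rewrite addnS Dstar_rem //.
rewrite (eq_bigr (fun z => alpha n k c0 #|Y| t.+1 * Dstar_iter k t F (rem phi z))); last first.
  move=> z zin; apply: IHD; rewrite dom_rem.
  by move: card'; rewrite (cardsD1 z (dom phi)) zin add1n => -[].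
rewrite -mulr_sumr -(Dstar_rem _ card') -Dstar_iterS /=.
by rewrite -addnS !mulrDl.
Qed.

Lemma adj n (Y : finType) j (G H : Lfun n Y) :
  \sum_(th | #|dom th| == j.+1) Dstar j.+1 G th * (H th)^* =
  \sum_(phi | #|dom phi| == j) G phi * (Dk j.+1 H phi)^*.
Proof.
rewrite /Dstar /Dk /=.
under eq_bigr => th /eqP -> do rewrite eqxx mulr_suml.
rewrite (exchange_big_dep (fun phi => #|dom phi| == j)) /=; last by move=> ? ? _ /andP [].
apply: eq_bigr => phi /eqP ->; rewrite eqxx rmorph_sum mulr_sumr.
done.
Qed.

Lemma norm_iter n (Y : finType) k c0 (F : Lfun n Y) :
  Pc k c0 F -> (forall phi, Dk k F phi = 0) ->
  forall t, norm2 (k + t) (Dstar_iter k t F) =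
    (\prod_(s < t) alpha n k c0 #|Y| s.+1) * norm2 k F.
Proof.
move=> HP HD; elim=> [|t IH]; first by rewrite addn0 big_ord0 mul1r.
have [_ IHD] := iter_props HP HD t.
rewrite {1}/norm2 addnS.
under eq_bigr => th _ do rewrite {1}Dstar_iterS.
rewrite adj.
under eq_bigr => phi /eqP c do rewrite (IHD _ c) conj_alphaM mulrCA.
by rewrite -mulr_sumr -/(norm2 _ _) IH big_ord_recr /= mulrCA mulrA.
Qed.

Lemma eig_sum0 (Y : finType) (q : Y -> Y -> algC) m (lam : 'I_m.+1 -> algC) i f :
  (forall y y', q y y' = q y' y) -> (forall y, \sum_(y' : Y) q y y' = 1) ->
  injective lam -> lam ord0 = 1 -> i != ord0 -> inW q lam i f -> \sum_(y : Y) f y = 0.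
Proof.
move=> hsym hst hinj h0 i0 hW.
have e1 : \sum_(y : Y) Qop q f y = lam i * \sum_(y : Y) f y.
  by rewrite mulr_sumr; apply: eq_bigr => y _; rewrite hW.
have e2 : \sum_(y : Y) Qop q f y = \sum_(y : Y) f y.
  rewrite /Qop exchange_big /=; apply: eq_bigr => y' _.
  by rewrite -mulr_suml (eq_bigr _ (fun y _ => hsym y y')) hst mul1r.
have : (lam i - 1) * \sum_(y : Y) f y = 0 by rewrite mulrBl mul1r -e1 e2 subrr.
move/eqP; rewrite mulf_eq0 subr_eq0 => /orP [|/eqP //].
by rewrite -h0 => /eqP /hinj /eqP; rewrite (negbTE i0).
Qed.

Lemma eig_const (Y : finType) (q : Y -> Y -> algC) m (lam : 'I_m.+1 -> algC) f :
  (forall y y', 0 <= q y y') ->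
  (forall y y', q y y' = q y' y) -> (forall y, \sum_(y' : Y) q y y' = 1) ->
  (forall y y', connect [rel x x' | q x x' != 0] y y') ->
  lam ord0 = 1 -> inW q lam ord0 f -> forall y y', f y = f y'.
Proof.
move=> hq0 hsym hst hirr h0 hW.
pose S := \sum_(y : Y) f y * (f y)^*.
have T1 : \sum_(y : Y) \sum_(y' : Y) q y y' * (f y * (f y)^*) = S.
  apply: eq_bigr => y _; by rewrite -mulr_suml hst mul1r.
have T4 : \sum_(y : Y) \sum_(y' : Y) q y y' * (f y' * (f y')^*) = S.
  rewrite exchange_big /=; apply: eq_bigr => y _.
  by rewrite -mulr_suml (eq_bigr _ (fun y' _ => hsym y' y)) hst mul1r.
have Qf : forall y, \sum_(y' : Y) q y y' * f y' = f y.
  by move=> y; have := hW y; rewrite h0 mul1r.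
have T2 : \sum_(y : Y) \sum_(y' : Y) q y y' * (f y' * (f y)^*) = S.
  apply: eq_bigr => y _.
  rewrite (eq_bigr (fun y' => q y y' * f y' * (f y)^*)); last by move=> y' _; rewrite mulrA.
  by rewrite -mulr_suml Qf.
have T3 : \sum_(y : Y) \sum_(y' : Y) q y y' * (f y * (f y')^*) = S.
  apply: eq_bigr => y _.
  rewrite (eq_bigr (fun y' => f y * (q y y' * f y')^*)); last first.
    by move=> y' _; rewrite rmorphM /= (geC0_conj (hq0 y y')) mulrCA.
  by rewrite -mulr_sumr -rmorph_sum /= Qf.
have D0 : \sum_(y : Y) \sum_(y' : Y) q y y' * ((f y - f y') * (f y - f y')^*) = 0.
  rewrite (eq_bigr (fun y => \sum_(y' : Y) (q y y' * (f y * (f y)^*) - q y y' * (f y * (f y')^*)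
       - q y y' * (f y' * (f y)^*) + q y y' * (f y' * (f y')^*)))); last first.
    move=> y _; apply: eq_bigr => y' _; rewrite rmorphB /=; ring.
  rewrite (eq_bigr (fun y => \sum_(y' : Y) (q y y' * (f y * (f y)^*)) - \sum_(y' : Y) q y y' * (f y * (f y')^*)
       - \sum_(y' : Y) q y y' * (f y' * (f y)^*) + \sum_(y' : Y) q y y' * (f y' * (f y')^*))); last first.
    by move=> y _; rewrite big_split /= !sumrB.
  by rewrite big_split /= !sumrB T1 T2 T3 T4 subrr sub0r addNr.
have ge0 : forall y y', 0 <= q y y' * ((f y - f y') * (f y - f y')^*).
  by move=> y y'; rewrite mulr_ge0 ?mul_conjC_ge0.
have edge : forall y y', q y y' != 0 -> f y = f y'.
  move=> y y' nz.
  have h1 : \sum_(y'' : Y) q y y'' * ((f y - f y'') * (f y - f y'')^*) = 0.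
    apply: (psumr_eq0P _ D0) => // z _; exact: sumr_ge0.
  have := psumr_eq0P (fun z _ => ge0 y z) h1 (i:=y') isT.
  move/eqP; rewrite mulf_eq0 (negbTE nz) /= mul_conjC_eq0 subr_eq0 => /eqP //.
move=> y y'.
have cl : closed [rel x x' | q x x' != 0] [pred z | f z == f y].
  move=> x x' /= /edge e; by rewrite !inE e.
by have := closed_connect cl (hirr y y'); rewrite !inE eqxx => /esym /eqP.
Qed.

Definition vv n (Y : finType) (Fj : 'I_n -> Y -> algC) (p : pf n Y) (j : 'I_n) : algC :=
  match p j with Some y => Fj j y | None => 0 end.

Lemma Esum_fund n (Y : finType) (q : Y -> Y -> algC) m (lam : 'I_m.+1 -> algC) k c G :
  (forall y y', 0 <= q y y') ->
  (forall y y', q y y' = q y' y) -> (forall y, \sum_(y' : Y) q y y' = 1) ->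
  (forall y y', connect [rel x x' | q x x' != 0] y y') ->
  injective lam -> lam ord0 = 1 ->
  @fundamental Y q m lam n k c G -> forall phi, Esum G phi = (c ord0)%:R * #|Y|%:R * G phi.
Proof.
move=> hq0 hsym hst hirr hinj h0 [A [ij [Fj [cA hW hc hG]]]] phi.
rewrite /Esum hG /tensorF.
case: (eqVneq (dom phi) A) => [dA|dA]; last first.
  rewrite mulr0 big1 // => x xin; rewrite big1 // => y _.
  by rewrite hG /tensorF (dom_upd_in y xin) (negbTE dA).
have key: forall x, x \in dom phi -> \sum_(y : Y) G (upd phi x y) =
   if ij x == ord0 then #|Y|%:R * tensorF A Fj phi else 0.
  move=> x xin.
  have xA : x \in A by rewrite -dA.
  have e: forall y, G (upd phi x y) = Fj x y * \prod_(j in A | j != x) vv Fj phi j.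
    move=> y; rewrite hG /tensorF (dom_upd_in y xin) dA eqxx (bigD1 x xA) /= ffunE eqxx.
    congr (_ * _); apply: eq_bigr => j /andP [_ jx]; by rewrite ffunE (negbTE jx).
  rewrite (eq_bigr _ (fun y _ => e y)) -mulr_suml /tensorF dA eqxx (bigD1 x xA) /=.
  move: (xin); rewrite inE; case E: (phi x) => [y0|] // _.
  case: (eqVneq (ij x) ord0) => [i0|i0].
    have hWx := hW x xA; rewrite i0 in hWx.
    rewrite (eq_bigr (fun _ => Fj x y0)) ?sum_constY; last first.
      by move=> y _; apply: (eig_const hq0 hsym hst hirr h0 hWx).
    by rewrite mulrA /vv.
  by rewrite (eig_sum0 hsym hst hinj h0 i0 (hW x xA)) mul0r.
rewrite (eq_bigr _ key) -big_mkcondr /= sumr_const.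
have -> : #|(fun i : 'I_n => (i \in dom phi) && (ij i == ord0))| = c ord0.
  by rewrite -hc; apply/eq_card => x /=; rewrite !inE dA.
by rewrite /tensorF dA eqxx -[_ *+ c ord0]mulr_natl mulrA.
Qed.

Lemma Esum_span n (Y : finType) (q : Y -> Y -> algC) m (lam : 'I_m.+1 -> algC) k c F :
  (forall y y', 0 <= q y y') ->
  (forall y y', q y y' = q y' y) -> (forall y, \sum_(y' : Y) q y y' = 1) ->
  (forall y y', connect [rel x x' | q x x' != 0] y y') ->
  injective lam -> lam ord0 = 1 ->
  @Pspan Y q m lam n k c F -> forall phi, Esum F phi = (c ord0)%:R * #|Y|%:R * F phi.
Proof.
move=> hq0 hsym hst hirr hinj h0 [N [coef [G [hG hF]]]] phi.
transitivity (\sum_(i < N) coef i * Esum (G i) phi).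
  rewrite /Esum.
  under eq_bigr => x _ do under eq_bigr => y _ do rewrite hF.
  under eq_bigr => x _ do rewrite exchange_big.
  rewrite exchange_big; apply: eq_bigr => i _; rewrite mulr_sumr; apply: eq_bigr => x _.
  by rewrite mulr_sumr.
rewrite hF mulr_sumr; apply: eq_bigr => i _.
by rewrite (Esum_fund hq0 hsym hst hirr hinj h0 (hG i)) mulrCA.
Qed.

Lemma supp_span n (Y : finType) (q : Y -> Y -> algC) m (lam : 'I_m.+1 -> algC) k c F :
  @Pspan Y q m lam n k c F -> forall th, #|dom th| != k -> F th = 0.
Proof.
move=> [N [coef [G [hG hF]]]] th nk; rewrite hF big1 // => i _.
have [A [ij [Fj [cA _ _ ->]]]] := hG i.
rewrite /tensorF; case: eqP => [e|_]; last by rewrite mulr0.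
by rewrite e cA eqxx in nk.
Qed.

Lemma alpha_val n k l ysz t : (l <= k)%N -> (2 * k <= n + l)%N -> (k + t <= n)%N ->
  (t <= n + l - 2 * k)%N ->
  alpha n k (k - l) ysz t = (t * (n + l - 2 * k).+1 - t * t)%:R * ysz%:R.
Proof.
move=> h1 h2; elim: t => [|t IH] h3 h4 /=; first by rewrite mul0r.
rewrite IH; [|lia|lia].
set N := (n + l - 2 * k)%N.
have e : ((t * N.+1 - t * t) + (n - (k + t)) = (t.+1 * N.+1 - t.+1 * t.+1) + (k - l + t))%N.
  rewrite /N; nia.
have e' : ((t * N.+1 - t * t)%:R + (n - (k + t))%:R : algC) =
   (t.+1 * N.+1 - t.+1 * t.+1)%:R + (k - l + t)%:R by rewrite -!natrD e.
have -> : ((n - (k + t))%:R : algC) = (t.+1 * N.+1 - t.+1 * t.+1)%:R + (k - l + t)%:R - (t * N.+1 - t * t)%:R.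
  by rewrite -e' addrAC subrr add0r.
ring.
Qed.

Lemma prod_alpha n k l ysz d : (l <= k)%N -> (2 * k <= n + l)%N -> (k + d <= n)%N ->
  (d <= n + l - 2 * k)%N ->
  \prod_(s < d) alpha n k (k - l) ysz s.+1 =
    (d`! * (n + l - 2 * k) ^_ d)%:R * (ysz ^ d)%:R.
Proof.
move=> h1 h2; elim: d => [|d IH] h3 h4; first by rewrite big_ord0 mul1r.
rewrite big_ord_recr (@alpha_val n k l ysz d.+1) //; try lia.
rewrite IH; [|lia|lia].
set N := (n + l - 2 * k)%N.
have e : (d`! * N ^_ d * (d.+1 * N.+1 - d.+1 * d.+1) = d.+1`! * N ^_ d.+1)%N.
  rewrite ffactnSr factS.
  have -> : (d.+1 * N.+1 - d.+1 * d.+1 = d.+1 * (N - d))%N by rewrite /N; nia.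
  by rewrite mulnCA !mulnA.
rewrite -e expnS !natrM /=; ring.
Qed.

Lemma shift_shift m d (c : 'I_m.+1 -> nat) : shift d (shift 1 c) = shift d.+1 c.
Proof.
apply: functional_extensionality => i; rewrite /shift.
by case: (i == ord0) => //; rewrite -subnDA add1n.
Qed.

Lemma shift0 m (c : 'I_m.+1 -> nat) : shift 0 c = c.
Proof. apply: functional_extensionality => i; rewrite /shift; by case: (i == ord0); rewrite ?subn0. Qed.

Lemma Pgen_iff (Y : finType) (q : Y -> Y -> algC) m (lam : 'I_m.+1 -> algC) n d :
  forall c k (G : Lfun n Y), Pgen q lam d c k G <->
    exists F, Pker q lam k (shift d c) F /\ forall th, G th = Dstar_iter k d F th.
Proof.
elim: d => [|d IH] c k G /=.
  rewrite shift0; split; first by move=> H; exists G.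
  by move=> [F [HF e]]; rewrite (functional_extensionality _ _ e).
split.
  move=> [G' [HG' e]]; have [F [HF e']] := (IH _ _ _).1 HG'.
  exists F; rewrite -shift_shift; split => //.
  by rewrite (functional_extensionality _ _ e') in e.
move=> [F [HF e]]; exists (Dstar_iter k d F); split => //.
by apply/IH; exists F; rewrite shift_shift.
Qed.

Lemma Dstar_ext n (Y : finType) j (A B : Lfun n Y) :
  (forall th, A th = B th) -> forall th, Dstar j A th = Dstar j B th.
Proof. by move=> e th; rewrite /Dstar; case: ifP => // _; apply: eq_bigr => p _. Qed.

Lemma Dstar_sub n (Y : finType) j (A B : Lfun n Y) th :
  Dstar j (fun p => A p - B p) th = Dstar j A th - Dstar j B th.
Proof. by rewrite /Dstar; case: ifP => _; rewrite ?subr0 // sumrB. Qed.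

Lemma Dstar_iter_sub n (Y : finType) k t (A B : Lfun n Y) th :
  Dstar_iter k t (fun p => A p - B p) th = Dstar_iter k t A th - Dstar_iter k t B th.
Proof.
elim: t th => [|t IH] th //=.
by rewrite (Dstar_ext _ IH) Dstar_sub.
Qed.

Lemma Dk_sub n (Y : finType) j (A B : Lfun n Y) th :
  Dk j (fun p => A p - B p) th = Dk j A th - Dk j B th.
Proof. by rewrite /Dk; case: j => [|j]; rewrite ?subr0 //; case: ifP => _; rewrite ?subr0 // sumrB. Qed.

Lemma Esum_sub n (Y : finType) (A B : Lfun n Y) phi :
  Esum (fun p => A p - B p) phi = Esum A phi - Esum B phi.
Proof. by rewrite /Esum -sumrB; apply: eq_bigr => x _; rewrite sumrB. Qed.

Lemma type_size_split m (a : 'I_m.+1 -> nat) : type_size a = (a ord0 + ell a)%N.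
Proof. by rewrite /type_size (bigD1 ord0). Qed.
Theorem proposition7p11 (n : nat) (Y : finType) (q : Y -> Y -> algC)
  (m : nat) (lam : 'I_m.+1 -> algC)
  (hq0 : forall y y', 0 <= q y y')
  (hsym : forall y y', q y y' = q y' y)
  (hstoch : forall y, \sum_(y' : Y) q y y' = 1)
  (hirr : forall y y', connect [rel x x' | q x x' != 0] y y')
  (hlam_inj : injective lam) (hlam0 : lam ord0 = 1)
  (hlam_eig : forall i, exists f : Y -> algC,
       (exists y, f y != 0) /\ inW q lam i f)
  (hlam_all : forall (mu : algC) (f : Y -> algC), (exists y, f y != 0) ->
       (forall y, Qop q f y = mu * f y) -> exists i, mu = lam i)
  (a : 'I_m.+1 -> nat) (h k : nat)
  (ha : type_size a = h)
  (hk1 : (ell a <= k)%N) (hk2 : (2 * k <= n + ell a)%N)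
  (hh1 : (k <= h)%N) (hh2 : (h <= n + ell a - k)%N) :
  (forall F : Lfun n Y, Pker q lam k (shift (h - k) a) F ->
     norm2 h (Dstar_iter k (h - k) F) =
       ((n + ell a - 2 * k)`!%:R * (h - k)`!%:R / (n + ell a - k - h)`!%:R)
       * (#|Y| ^ (h - k))%:R * norm2 k F)
  /\ (forall F G : Lfun n Y,
        Pker q lam k (shift (h - k) a) F -> Pker q lam k (shift (h - k) a) G ->
        (forall th, Dstar_iter k (h - k) F th = Dstar_iter k (h - k) G th) ->
        forall th, F th = G th)
  /\ (forall G : Lfun n Y,
        Pgen q lam (h - k) a k G <->
        exists F, Pker q lam k (shift (h - k) a) F /\
                  forall th, G th = Dstar_iter k (h - k) F th).
Proof.
set c := shift (h - k) a.
have hc0 : c ord0 = (k - ell a)%N.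
  rewrite /c /shift eqxx; move: ha; rewrite type_size_split; lia.
have hn : (k + (h - k) <= n)%N by lia.
have hd : (h - k <= n + ell a - 2 * k)%N by lia.
have PcF : forall F : Lfun n Y, Pker q lam k c F -> Pc k (k - ell a) F.
  move=> F HF; rewrite /Pc => phi cp; rewrite -hc0; exact: (Esum_span hq0 hsym hstoch hirr hlam_inj hlam0 (proj1 HF)).
have normF : forall F : Lfun n Y, Pker q lam k c F ->
   norm2 h (Dstar_iter k (h - k) F) =
   ((h - k)`! * (n + ell a - 2 * k) ^_ (h - k))%:R * (#|Y| ^ (h - k))%:R * norm2 k F.
  move=> F HF; have := norm_iter (PcF F HF) (proj2 HF) (h - k).
  by rewrite subnKC // prod_alpha.
have Ypos : (0 < #|Y|)%N.
  have [f [[y _] _]] := hlam_eig ord0; apply/card_gt0P; by exists y.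
have coef_nz : ((h - k)`! * (n + ell a - 2 * k) ^_ (h - k))%:R * (#|Y| ^ (h - k))%:R != 0 :> algC.
  rewrite mulf_eq0 !pnatr_eq0 negb_or muln_eq0 negb_or -!lt0n fact_gt0 ffact_gt0 hd /=.
  by rewrite expn_gt0 Ypos.
split; [|split].
- move=> F HF; rewrite (normF F HF).
  have e : (n + ell a - k - h = n + ell a - 2 * k - (h - k))%N by lia.
  rewrite e -(ffact_fact hd) !natrM.
  have nz : ((n + ell a - 2 * k - (h - k))`!%:R : algC) != 0 by rewrite pnatr_eq0 -lt0n fact_gt0.
  by field.
- move=> F G HF HG e th.
  set H := fun p => F p - G p.
  have HP : Pc k (k - ell a) H.
    rewrite /Pc => phi cp; rewrite /H Esum_sub (PcF F HF phi cp) (PcF G HG phi cp); ring.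
  have HD : forall phi, Dk k H phi = 0.
    by move=> phi; rewrite Dk_sub (proj2 HF) (proj2 HG) subrr.
  have := norm_iter HP HD (h - k); rewrite subnKC // prod_alpha //.
  have -> : norm2 h (Dstar_iter k (h - k) H) = 0.
    by rewrite /norm2 big1 // => p _; rewrite Dstar_iter_sub e subrr mul0r.
  move/esym/eqP; rewrite mulf_eq0 (negbTE coef_nz) /= => /eqP n0.
  case: (eqVneq #|dom th| k) => [ck|ck]; last first.
    by rewrite (supp_span (proj1 HF) ck) (supp_span (proj1 HG) ck).
  have := psumr_eq0P (fun p _ => mul_conjC_ge0 (H p)) n0 (i:=th) (introT eqP ck).
  by move/eqP; rewrite mul_conjC_eq0 subr_eq0 => /eqP.
- move=> G; exact: Pgen_iff.
Qed.
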